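(* Let $p$ be an odd prime, $G=\mu_p\times\mu_p$, and let $\mathcal{P}$ be a fusion partition of $G$ having exactly $p$ singular sets and such that every non-singular set has exactly two elements. Then there exist $\alpha,\beta\in G$ such that the singular sets are exactly $\{\alpha^i\}$, $i=0,\dots,p-1$, and the non-singular sets are exactly the sets $\{\alpha^i\beta^j,\alpha^i\beta^{-j}\}$ with $0\le i\le p-1$ and $1\le j\le p-1$.
   Context: A unital partition of a finite commutative group $G$ is a partition $G=\{1\}\sqcup A_0\sqcup\dots\sqcup A_s$ such that, with $a_i=\sum_{x\in A_i}x\in\mathbb{Z}[G]$, the $\mathbb{Z}$-span of $1$ and the $a_i$ is closed under multiplication in $\mathbb{Z}[G]$. It is a fusion partition if moreover (1) for each member $A_i$ the set $\{x^{-1}:x\in A_i\}$ is a member, denoted $A_{i^*}$, and (2) writing $a_ia_j=\sum_kn^k_{i,j}a_k$, one has $n^k_{i,j}|A_k|=n^{j^*}_{i,k^*}|A_{j^*}|$. A member of a partition is singular if it has exactly one element (the set $\{1\}$ counts as singular). *)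

(* Defs.v *)
From HB Require Import structures.
From mathcomp Require Import all_boot all_order all_algebra.
Set Implicit Arguments. Unset Strict Implicit. Unset Printing Implicit Defensive.
Import GRing.Theory.
Local Open Scope ring_scope.

(* The group mu_p x mu_p is modelled additively as 'Z_p * 'Z_p
   (mu_p is cyclic of order p, hence isomorphic to Z/pZ); the identity
   "1" of G is 0, x^{-1} is -x and alpha^i beta^j is i*alpha + j*beta. *)
Definition GT (p : nat) : Type := ('Z_p * 'Z_p)%type.
HB.instance Definition _ (p : nat) := GRing.Zmodule.on (GT p).
HB.instance Definition _ (p : nat) := Finite.on (GT p).

Section GroupRing.
Variable G : finZmodType.

(* Elements of Z[G] are represented as functions G -> int. *)
Definition chi (A : {set G}) : G -> int := fun z => (z \in A)%:Z.

Definition gmul (f g : G -> int) : G -> int :=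
  fun z => \sum_(x : G) f x * g (z - x).

Definition is_part_with_one (P : {set {set G}}) : Prop :=
  partition P [set: G] /\ [set 0 : G] \in P.

(* unital: the Z-span of 1 and the a_i (i.e. of the a_A, A in P, since
   {1} is a member) is closed under multiplication *)
Definition unital_partition (P : {set {set G}}) : Prop :=
  is_part_with_one P /\
  forall A B, A \in P -> B \in P ->
    exists c : {set G} -> int,
      forall z, gmul (chi A) (chi B) z = \sum_(C in P) c C * chi C z.

Definition setinv (A : {set G}) : {set G} := [set - x | x in A].

(* structure constant n^C_{A,B}: coefficient of a_C in a_A a_B, read off
   at an element of C (well defined for unital partitions) *)
Definition sconst (A B C : {set G}) : int :=
  gmul (chi A) (chi B) (odflt 0 [pick x in C]).

Definition fusion_partition (P : {set {set G}}) : Prop :=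
  unital_partition P /\
  (forall A, A \in P -> setinv A \in P) /\
  (forall A B C, A \in P -> B \in P -> C \in P ->
     sconst A B C * #|C|%:Z = sconst A (setinv C) (setinv B) * #|setinv B|%:Z).

Definition singular_sets (P : {set {set G}}) : {set {set G}} :=
  [set A in P | #|A| == 1%N].

End GroupRing.

(* Main.v *)
Require Import Defs.
From HB Require Import structures.
From mathcomp Require Import all_boot all_order all_algebra.
Import GRing.Theory.
Local Open Scope ring_scope.
Set Implicit Arguments. Unset Strict Implicit.

Section Arith.
Variable p : nat.
Hypothesis hp : prime p.

Lemma charG (x : GT p) : x *+ p = 0.
Proof.
have p1 : (1 < p)%N by apply: prime_gt1.
have h1 : (x *+ p : 'Z_p * 'Z_p).1 = 0.
  by rewrite raddfMn -mulr_natr pchar_Zp // mulr0.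
have h2 : (x *+ p : 'Z_p * 'Z_p).2 = 0.
  by rewrite raddfMn -mulr_natr pchar_Zp // mulr0.
move: h1 h2.
case: (x *+ p) => a b /= -> ->.
reflexivity.
Qed.

Lemma cardG : #|{: GT p}| = (p * p)%N.
Proof. rewrite /GT card_prod card_ord Zp_cast //; exact: prime_gt1. Qed.

Lemma bez (k : nat) (x : GT p) : ~~ (p %| k)%N ->
  exists a : nat, x = - ((x *+ k) *+ a).
Proof.
move=> nd.
have p0 : (0 < p)%N by apply: prime_gt0.
case: (Bezoutl k p0) => a _.
have -> : gcdn p k = 1%N by apply/eqP; move: nd; rewrite -prime_coprime.
case/dvdnP => m hm.
exists a; apply/eqP; rewrite -addr_eq0 -mulrnA mulnC -mulrS -addn1 addnC hm.
by rewrite mulnC mulrnA charG mul0rn.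
Qed.

Lemma mulrn_eq0 (k : nat) (x : GT p) : ~~ (p %| k)%N -> x *+ k = 0 -> x = 0.
Proof.
by move=> nd hk; case: (@bez k x nd) => a ->; rewrite hk mul0rn oppr0.
Qed.

End Arith.

Section Main.
Variable p : nat.
Hypothesis hp : prime p.
Hypothesis hodd : odd p.
Variable P : {set {set GT p}}.
Hypothesis hF : fusion_partition P.
Hypothesis hsz : forall A, A \in P -> #|A| != 1%N -> #|A| = 2%N.

Let hpart : partition P [set: GT p].
Proof. by case: hF => [[[]]]. Qed.
Let h0 : [set 0 : GT p] \in P.
Proof. by case: hF => [[[]]]. Qed.
Let hun : forall A B, A \in P -> B \in P ->
    exists c : {set GT p} -> int,
      forall z, gmul (chi A) (chi B) z = \sum_(C in P) c C * chi C z.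
Proof. by case: hF => [[]]. Qed.

Let tI : trivIset P.
Proof. by case/and3P: hpart. Qed.
Let cov x : x \in cover P.
Proof. by case/and3P: hpart => /eqP -> _ _; rewrite inE. Qed.

Definition blk (x : GT p) := pblock P x.

Lemma blkP x : blk x \in P.
Proof. exact: pblock_mem. Qed.
Lemma blk_x x : x \in blk x.
Proof. by rewrite /blk mem_pblock. Qed.
Lemma blk_same x t : t \in blk x -> blk t = blk x.
Proof. exact: same_pblock. Qed.
Lemma blk_def B x : B \in P -> x \in B -> blk x = B.
Proof. exact: def_pblock. Qed.

Lemma gmul_chi (A B : {set GT p}) (z : GT p) :
  gmul (chi A) (chi B) z = (#|[set a in A | z - a \in B]|)%:Z.
Proof.
rewrite /gmul -sum1_card (big_morph Posz PoszD (erefl 0%:Z)) [RHS]big_mkcond /=.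
apply: eq_bigr => x _; rewrite /chi !inE.
by case: (x \in A); case: (z - x \in B).
Qed.

Lemma const A B z t : A \in P -> B \in P -> t \in blk z ->
  #|[set a in A | t - a \in B]| = #|[set a in A | z - a \in B]|.
Proof.
move=> PA PB tz.
case: (hun PA PB) => c H.
have key w : gmul (chi A) (chi B) w = c (blk w).
  rewrite H (bigD1 (blk w)) ?blkP //= big1 ?addr0.
    by rewrite /chi blk_x mulr1.
  move=> C /andP [PC nC]; rewrite /chi.
  case wC: (w \in C); last by rewrite mulr0.
  by move: nC; rewrite (blk_def PC wC) eqxx.
have := key t; rewrite (blk_same tz) -key !gmul_chi.
by case.
Qed.

Lemma pos_count A B z t a0 : A \in P -> B \in P -> t \in blk z ->
  a0 \in A -> z - a0 \in B -> exists2 a, a \in A & t - a \in B.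
Proof.
move=> PA PB tz a0A za0.
have : (0 < #|[set a in A | (t - a)%R \in B]|)%N.
  by rewrite (const PA PB tz) card_gt0; apply/set0Pn; exists a0; rewrite inE a0A.
rewrite card_gt0 => /set0Pn [a]; rewrite inE => /andP [aA taB].
by exists a.
Qed.


Definition sing x := #|blk x| == 1%N.

Lemma sing_eq x : sing x -> blk x = [set x].
Proof.
case/cards1P => y hy; move: (blk_x x); rewrite hy inE => /eqP ->.
by rewrite -hy.
Qed.

Lemma sing_of w : (forall t, t \in blk w -> t = w) -> sing w.
Proof.
move=> H; apply/cards1P; exists w; apply/setP => t; rewrite inE.
apply/idP/eqP => [/H // | ->]; exact: blk_x.
Qed.

Lemma nsing x : ~~ sing x -> exists2 t, t != x & blk x = [set x; t].
Proof.
move=> ns; have /eqP := hsz (blkP x) ns.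
case/cards2P => a [b [ab hab]].
move: (blk_x x); rewrite hab !inE => /orP [] /eqP ->.
  by exists b; rewrite // eq_sym.
by exists a; rewrite // setUC.
Qed.

Lemma sing0 : sing 0.
Proof. by rewrite /sing (blk_def h0 (set11 0)) cards1. Qed.

Lemma singD x y : sing x -> sing y -> sing (x + y).
Proof.
move=> sx sy; apply: sing_of => t tz.
have ax : x \in blk x := blk_x x.
have := @pos_count _ _ _ _ x (blkP x) (blkP y) tz ax.
rewrite addrAC subrr add0r => /(_ (blk_x y)) [a].
rewrite (sing_eq sx) (sing_eq sy) !inE => /eqP -> /eqP <-.
by rewrite addrC subrK.
Qed.

Lemma singMn x n : sing x -> sing (x *+ n).
Proof. by move=> sx; elim: n => [|n IH]; rewrite ?mulr0n ?sing0 // mulrS singD. Qed.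

Lemma singN x : sing x -> sing (- x).
Proof.
move=> sx; have hc : x *+ (p.-1).+1 = 0 by rewrite prednK ?prime_gt0 // charG.
rewrite mulrS in hc.
have -> : - x = x *+ p.-1.
  by apply/eqP; rewrite eq_sym -addr_eq0 addrC hc.
exact: singMn.
Qed.

Lemma singB x y : sing x -> sing y -> sing (x - y).
Proof. by move=> sx sy; rewrite singD // singN. Qed.

Lemma nsingD x s : sing s -> ~~ sing x -> ~~ sing (x + s).
Proof.
move=> ss; apply: contra => h.
by rewrite -(addrK s x) singB.
Qed.

Lemma transl s y y' : sing s -> ~~ sing y -> y' \in blk y -> y' + s \in blk (y + s).
Proof.
move=> ss ny yy.
have nys := nsingD ss ny.
case: (nsing nys) => t tn ht.
have tz : t \in blk (y + s) by rewrite ht !inE eqxx orbT.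
have := @pos_count _ _ _ _ s (blkP s) (blkP y) tz (blk_x s).
rewrite addrK => /(_ (blk_x y)) [a].
rewrite (sing_eq ss) inE => /eqP ->.
case: (nsing ny) => y2 y2n hy2.
rewrite hy2 !inE => /orP [/eqP h | /eqP h].
  by move: tn; rewrite -h subrK eqxx.
move: yy; rewrite hy2 !inE => /orP [/eqP -> | /eqP ->]; first exact: blk_x.
by rewrite -h subrK.
Qed.

Lemma two_neq (u v : GT p) : u *+ 2 = v *+ 2 -> u = v.
Proof.
move=> h; apply/eqP; rewrite -subr_eq0; apply/eqP.
apply: (@mulrn_eq0 p hp 2); last by rewrite mulrnBl h subrr.
apply/negP => /(@dvdn_leq p 2 isT); rewrite leq_eqVlt ltnS.
case/orP => [/eqP h2 | h1]; first by move: hodd; rewrite h2.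
by move: (prime_gt1 hp); rewrite ltnNge h1.
Qed.

Lemma pair_sum u v : ~~ sing u -> v \in blk u -> v != u -> sing (u + v).
Proof.
move=> nu vu vnu.
case: (nsing nu) => t tn ht.
have hb : blk u = [set u; v].
  by move: vu; rewrite ht !inE (negbTE vnu) /= => /eqP ->.
apply: sing_of => w wz.
have hc := const (blkP u) (blkP u) wz.
have full : [set a in blk u | u + v - a \in blk u] = blk u.
  apply/setP => a; rewrite !inE hb !inE; apply/idP/idP; first by case/andP.
  case/orP => /eqP ->; rewrite eqxx ?orbT /=.
  - by rewrite addrAC subrr add0r eqxx orbT.
  - by rewrite addrK eqxx.
have sub : [set a in blk u | w - a \in blk u] = blk u.
  apply/eqP; rewrite eqEcard hc full leqnn andbT.
  by apply/subsetP => a; rewrite inE => /andP [].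
have uin : u \in [set a in blk u | w - a \in blk u] by rewrite sub blk_x.
have vin : v \in [set a in blk u | w - a \in blk u] by rewrite sub.
move: uin vin; rewrite !inE hb !inE !eqxx /= orbT /=.
case/orP => /eqP h1 /orP [] /eqP h2.
- have : w = u *+ 2 by apply/eqP; rewrite mulr2n -subr_eq h1.
  move=> hw; move: h2; rewrite hw => /eqP; rewrite subr_eq mulr2n => /eqP /addrI h.
  by move: vnu; rewrite h eqxx.
- have hw : w = u *+ 2 by apply/eqP; rewrite mulr2n -subr_eq h1.
  move: h2; rewrite hw => /eqP; rewrite subr_eq -mulr2n => /eqP /two_neq h.
  by move: vnu; rewrite h eqxx.
- by apply/eqP; rewrite addrC -subr_eq h1.
- by apply/eqP; rewrite addrC -subr_eq h1.
Qed.

Lemma blk_sym x : - x \in blk x -> ~~ sing (x *+ 2) -> blk x = [set x; - x].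
Proof.
move=> hx n2.
have nx : ~~ sing x by apply: contra n2 => /singMn.
case: (nsing nx) => t tn ht.
move: hx; rewrite ht !inE => /orP [/eqP h | /eqP -> //].
by move: n2; rewrite mulr2n -{2}h subrr sing0.
Qed.

Lemma addsym x y : - x \in blk x -> - y \in blk y -> ~~ sing (x + y) ->
  ~~ sing (x *+ 2) -> ~~ sing (y *+ 2) -> - (x + y) \in blk (x + y).
Proof.
move=> hx hy nxy n2x n2y.
case: (nsing nxy) => t tn ht.
have tz : t \in blk (x + y) by rewrite ht !inE eqxx orbT.
have e : x + y - x = y by rewrite addrAC subrr add0r.
have := @pos_count _ _ _ _ x (blkP x) (blkP y) tz (blk_x x).
rewrite e => /(_ (blk_x y)) [a].
rewrite (blk_sym hx n2x) (blk_sym hy n2y) !inE.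
case/orP => /eqP -> /orP [] /eqP h.
- by move: tn; rewrite -h [x + _]addrC subrK eqxx.
- have ht' : t = - y + x by apply/eqP; rewrite -subr_eq h.
  have := pair_sum nxy tz tn; rewrite ht' addrA addrK -mulr2n.
  by rewrite (negbTE n2x).
- have ht' : t = y + - x by apply/eqP; rewrite -subr_eq h.
  have := pair_sum nxy tz tn; rewrite ht' addrC addrA subrK -mulr2n.
  by rewrite (negbTE n2y).
- have ht' : t = - y + - x by apply/eqP; rewrite -subr_eq h.
  by rewrite opprD addrC; move: tz; rewrite ht'.
Qed.

Hypothesis hcs : #|singular_sets P| = p.

Definition Sset := [set x | sing x].

Lemma S_img : [set [set x] | x in Sset] = singular_sets P.
Proof.
apply/setP => A; rewrite /singular_sets inE; apply/imsetP/andP.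
  case=> x; rewrite inE => sx ->; split; first by rewrite -(sing_eq sx) blkP.
  by rewrite cards1.
case=> PA /cards1P [x hx]; exists x => //.
rewrite inE /sing (blk_def PA (_ : x \in A)) ?hx ?cards1 ?set11 //.
Qed.

Lemma cardS : #|Sset| = p.
Proof. by rewrite -[RHS]hcs -S_img card_imset //; exact: set1_inj. Qed.

Lemma nsingMn k x : ~~ (p %| k)%N -> ~~ sing x -> ~~ sing (x *+ k).
Proof.
move=> nd; apply: contra => h.
by case: (@bez p hp k x nd) => a ->; rewrite singN // singMn.
Qed.

Lemma mulrn_inj (x : GT p) (i j : nat) : x != 0 -> (i < p)%N -> (j < p)%N ->
  x *+ i = x *+ j -> i = j.
Proof.
move=> nx.
wlog le : i j / (i <= j)%N.
  move=> H ip jp h; case: (leqP i j) => [l|/ltnW l]; first exact: H.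
  by apply/esym/H.
move=> ip jp h.
have : x *+ (j - i) = 0 by rewrite mulrnBr // h subrr.
case dv: (p %| j - i)%N.
  move=> _; apply/eqP; rewrite eqn_leq le /= -subn_eq0.
  case: (posnP (j - i)) => // pos.
  by move: (dvdn_leq pos dv); rewrite leqNgt (leq_ltn_trans (leq_subr i j) jp).
by move/(mulrn_eq0 hp (negbT dv)) => h0'; move: nx; rewrite h0' eqxx.
Qed.

Lemma exists_alpha : exists2 a, sing a & a != 0.
Proof.
have : (0 < #|Sset :\ (0 : GT p)%R|)%N.
  have := cardsD1 (0 : GT p) Sset; rewrite cardS inE sing0 /= => h.
  have h2 := prime_gt1 hp; rewrite h add1n ltnS in h2; exact: h2.
by rewrite card_gt0 => /set0Pn [a]; rewrite !inE => /andP [a0 sa]; exists a.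
Qed.

Lemma S_eq a x : sing a -> a != 0 -> sing x -> exists i : 'I_p, x = a *+ i.
Proof.
move=> sa a0 sx.
have sub : [set a *+ (nat_of_ord i) | i : 'I_p] \subset Sset.
  by apply/subsetP => y /imsetP [i _ ->]; rewrite inE singMn.
have cT : #|[set a *+ (nat_of_ord i) | i : 'I_p]| = p.
  rewrite card_imset ?card_ord // => i j /(mulrn_inj a0 (ltn_ord i) (ltn_ord j)).
  exact: val_inj.
have eqTS : [set a *+ (nat_of_ord i) | i : 'I_p] = Sset.
  by apply/eqP; rewrite eqEcard sub cT cardS leqnn.
have : x \in [set a *+ (nat_of_ord i) | i : 'I_p] by rewrite eqTS inE.
by case/imsetP => i _ ->; exists i.
Qed.

Lemma ndvd k : (0 < k)%N -> (k < p)%N -> ~~ (p %| k)%N.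
Proof.
move=> k0 kp; apply/negP => /(dvdn_leq k0); by rewrite leqNgt kp.
Qed.

Lemma ndvd2 : ~~ (p %| 2)%N.
Proof.
apply/negP => /(@dvdn_leq p 2 isT); rewrite leq_eqVlt ltnS.
case/orP => [/eqP h2 | h1]; first by move: hodd; rewrite h2.
by move: (prime_gt1 hp); rewrite ltnNge h1.
Qed.

Lemma exists_y : exists y, ~~ sing y.
Proof.
case: (pickP (fun y => ~~ sing y)) => [y hy | h]; first by exists y.
have eT : Sset = setT by apply/setP => y; rewrite !inE; move: (h y) => /= /negbFE.
have := cardS; rewrite eT cardsT (cardG hp) => hpp.
have : (p * 1 < p * p)%N by rewrite ltn_pmul2l ?(prime_gt0 hp) // (prime_gt1 hp).
by rewrite muln1 hpp ltnn.
Qed.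

Lemma halfS : ((p./2).+1 * 2 = p.+1)%N.
Proof.
have := odd_double_half p; rewrite hodd => hd.
by rewrite mulSn muln2 -[in RHS]hd add1n.
Qed.

Lemma exists_beta : exists2 b, ~~ sing b &
  forall j, (0 < j)%N -> (j < p)%N -> - (b *+ j) \in blk (b *+ j).
Proof.
case: exists_y => y ny; case: (nsing ny) => y' yn hy.
have y'in : y' \in blk y by rewrite hy !inE eqxx orbT.
have ss : sing (y + y') := pair_sum ny y'in yn.
pose s := y + y'; pose h := s *+ (p./2).+1.
have sh : sing h by apply: singMn.
have h2 : h *+ 2 = s.
  by rewrite /h -mulrnA halfS mulrSr charG // add0r.
have e1 : y' = s - y by rewrite /s addrAC subrr add0r.
have nb : ~~ sing (y - h).
  apply: contra ny => sb; by rewrite -(subrK h y) singD.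
exists (y - h) => //.
have hb : - (y - h) \in blk (y - h).
  have := transl (singN sh) ny y'in.
  by rewrite e1 -h2 mulr2n addrAC addrK opprB.
move=> j; elim: j => [|j IH] // _ jp.
case: j IH jp => [|j] IH jp; first by rewrite mulr1n.
have IH' := IH isT (ltnW jp).
rewrite mulrSr; apply: addsym => //.
- rewrite -mulrSr; apply: nsingMn => //; exact: (ndvd (ltn0Sn _) jp).
- rewrite -mulrnA; apply: nsingMn => //.
  by rewrite Euclid_dvdM // negb_or ndvd2 andbT ndvd // ltnW.
- apply: nsingMn => //; exact: ndvd2.
Qed.

Lemma sing_diff b j j' : ~~ sing b -> (j < p)%N -> (j' < p)%N ->
  sing (b *+ j - b *+ j') -> j = j'.
Proof.
move=> nb.
wlog le : j j' / (j <= j')%N.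
  move=> H jp j'p hs; case: (leqP j j') => [l|/ltnW l]; first exact: H.
  by apply/esym/H => //; rewrite -opprB singN.
move=> jp j'p hs.
have hs' : sing (b *+ (j' - j)) by rewrite mulrnBr // -opprB singN.
case: (posnP (j' - j)) => [/eqP|pos].
  by rewrite subn_eq0 => l; apply/eqP; rewrite eqn_leq le l.
have : (j' - j < p)%N by apply: leq_ltn_trans (leq_subr j j') j'p.
by move=> lt; move: (nsingMn (ndvd pos lt) nb); rewrite hs'.
Qed.

Lemma decomp a b : sing a -> a != 0 -> ~~ sing b ->
  forall x, exists i : 'I_p, exists j : 'I_p, x = a *+ i + b *+ j.
Proof.
move=> sa a0 nb x.
pose f := fun ij : 'I_p * 'I_p => a *+ ij.1 + b *+ ij.2.
have finj : injective f.
  move=> [i j] [i' j']; rewrite /f /= => h.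
  have e : b *+ j = a *+ i' + b *+ j' - a *+ i by rewrite -h addrAC subrr add0r.
  have sd : sing (b *+ j - b *+ j') by rewrite e addrAC addrK singB // singMn.
  have ejj := sing_diff nb (ltn_ord j) (ltn_ord j') sd.
  have ejj' : j = j' by apply: val_inj.
  rewrite ejj' in h *; move/addIr: h => h.
  have eii := mulrn_inj a0 (ltn_ord i) (ltn_ord i') h.
  by congr pair; apply: val_inj.
have cr : (#|{: GT p}| <= #|{: 'I_p * 'I_p}|)%N by rewrite (cardG hp) card_prod card_ord.
have := inj_card_onto finj cr x.
by case/codomP => [[i j] ->]; exists i, j.
Qed.

Lemma keyset a b (i j : nat) : sing a -> ~~ sing b ->
  (forall j, (0 < j)%N -> (j < p)%N -> - (b *+ j) \in blk (b *+ j)) ->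
  (0 < j)%N -> (j < p)%N ->
  ~~ sing (a *+ i + b *+ j) /\
  blk (a *+ i + b *+ j) = [set a *+ i + b *+ j; a *+ i - b *+ j].
Proof.
move=> sa nb hb j0 jp.
have sai : sing (a *+ i) by apply: singMn.
have nbj : ~~ sing (b *+ j) by apply: nsingMn => //; exact: ndvd.
have nz : ~~ sing (a *+ i + b *+ j) by rewrite addrC nsingD.
split => //.
have win : a *+ i - b *+ j \in blk (a *+ i + b *+ j).
  by have := transl sai nbj (hb j j0 jp); rewrite addrC [b *+ j + _]addrC.
case: (nsing nz) => t tn ht.
move: win; rewrite ht !inE => /orP [/eqP h | /eqP -> //].
move/addrI: h => h.
have : sing ((b *+ j) *+ 2) by rewrite mulr2n -{1}h addNr sing0.
rewrite -mulrnA => s2.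
have : ~~ (p %| j * 2)%N by rewrite Euclid_dvdM // negb_or ndvd2 andbT ndvd.
by move/(nsingMn)/(_ nb); rewrite s2.
Qed.

Lemma final :
  exists alpha beta : GT p,
    singular_sets P = [set [set alpha *+ (nat_of_ord i)] | i : 'I_p] /\
    [set A in P | #|A| != 1%N] =
      [set [set alpha *+ (nat_of_ord i) + beta *+ (nat_of_ord j);
             alpha *+ (nat_of_ord i) - beta *+ (nat_of_ord j)]
        | i in [set: 'I_p], j in [set j0 : 'I_p | (0 < j0)%N]].
Proof.
case: exists_alpha => a sa a0; case: exists_beta => b nb hb.
exists a, b; split.
  apply/setP => A; rewrite /singular_sets inE; apply/andP/imsetP.
    case=> PA /cards1P [x hx].
    have xA : x \in A by rewrite hx set11.
    have sx : sing x by rewrite /sing (blk_def PA xA) hx cards1.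
    case: (S_eq sa a0 sx) => i hi; exists i => //; by rewrite hx hi.
  case=> i _ ->; have si := singMn i sa.
  by rewrite -(sing_eq si) blkP; split => //; rewrite (sing_eq si) cards1.
apply/setP => A; rewrite inE; apply/andP/imset2P.
  case=> PA n1; have c2 := hsz PA n1.
  have : (0 < #|A|)%N by rewrite c2.
  rewrite card_gt0 => /set0Pn [x xA].
  have hA := blk_def PA xA.
  case: (decomp sa a0 nb x) => i [j hx].
  have j0 : (0 < j)%N.
    rewrite lt0n; apply/negP => /eqP j0.
    have sx : sing x by rewrite hx j0 mulr0n addr0 singMn.
    by move: sx n1; rewrite -hA /sing => ->.
  have [_ hk] := keyset i sa nb hb j0 (ltn_ord j).
  exists i j => //; first by rewrite inE.
  by rewrite -hA hx hk.
case=> i j _; rewrite inE => j0 ->.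
have [nz hk] := keyset i sa nb hb j0 (ltn_ord j).
by rewrite -hk blkP.
Qed.

End Main.

Unset Implicit Arguments. Set Strict Implicit.

Theorem theorem4p1 (p : nat) (hp : prime p) (hodd : odd p)
  (P : {set {set GT p}}) :
  fusion_partition P ->
  #|singular_sets P| = p ->
  (forall A, A \in P -> #|A| != 1%N -> #|A| = 2%N) ->
  exists alpha beta : GT p,
    singular_sets P = [set [set alpha *+ (nat_of_ord i)] | i : 'I_p] /\
    [set A in P | #|A| != 1%N] =
      [set [set alpha *+ (nat_of_ord i) + beta *+ (nat_of_ord j);
             alpha *+ (nat_of_ord i) - beta *+ (nat_of_ord j)]
        | i in [set: 'I_p], j in [set j0 : 'I_p | (0 < j0)%N]].
Proof.
move=> hF hcs hsz.
exact: (@final p hp hodd P hF hsz hcs).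
Qed.
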